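(* Let $\alpha,\beta$ be $H$-colorings of $G$ and $q\in V(G)$. If $Q\in\pi(H)$ is realizable for $\alpha,\beta,q$, then $Q$ is topologically valid for $\alpha,\beta,q$.
   Context: All graphs are finite and undirected. $G$ is a connected loopless graph with at least one edge. $H$ is a connected graph with at least one edge, possibly with loops, having the monochromatic neighborhood property: for all $a,b\in V(H)$, $|N_H(a)\cap N_H(b)|\le 1$, where $N_H(a)=\{w: aw\in E(H)\}$. An $H$-coloring of $G$ is a map $\sigma:V(G)\to V(H)$ such that $uv\in E(G)$ implies $\sigma(u)\sigma(v)\in E(H)$. An $H$-recoloring sequence is a sequence $\sigma_0,\dots,\sigma_l$ of $H$-colorings of $G$ in which consecutive colorings differ in the color of exactly one vertex. Walks: an oriented edge is an ordered pair $(x,y)$ with $xy$ an edge; $(x,y)^{-1}=(y,x)$. A walk from $x$ to $y$ is a sequence of oriented edges, consecutive ones sharing endpoints, starting at $x$ and ending at $y$; $\varepsilon$ is the empty walk; $W^{-1}$ the reversed walk; $W_1W_2$ concatenation. A walk is reduced if no two consecutive edges $e_ie_{i+1}$ satisfy $e_{i+1}=e_i^{-1}$; $\overline{W}$ is the unique reduced walk obtained by repeatedly deleting such pairs. $A\cdot B:=\overline{AB}$ for reduced $A,B$ with $B$ starting where $A$ ends. $\pi(H)$ is the set of reduced walks in $H$. For a walk $W=(x_0,x_1)\dots(x_{k-1},x_k)$ in $G$, $\alpha(W)=(\alpha(x_0),\alpha(x_1))\dots(\alpha(x_{k-1}),\alpha(x_k))$. Vertex walks: in a one-step sequence $\sigma_0,\sigma_1$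 where vertex $w$ changes from $a$ to $b\ne a$, all neighbors of $w$ have a common color $h$ (the unique element of $N_H(a)\cap N_H(b)$); set $S(w)=(a,h)(h,b)$ and $S(v)=\varepsilon$ for $v\ne w$. For the empty sequence $S(v)=\varepsilon$; for longer sequences $S(v)$ is the concatenation of the one-step walks in order. Realizable: $Q\in\pi(H)$ is realizable for $\alpha,\beta,q$ if there is an $H$-recoloring sequence $S=\sigma_0,\dots,\sigma_l$ with $\sigma_0=\alpha$, $\sigma_l=\beta$, $\overline{S(q)}=Q$. Topologically valid: a reduced walk $Q$ in $H$ from $\alpha(q)$ to $\beta(q)$ is topologically valid for $\alpha,\beta,q$ if for every closed walk $C$ in $G$ from $q$ to $q$, $\overline{\beta(C)}=Q^{-1}\cdot\overline{\alpha(C)}\cdot Q$. *)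

(* Defs.v *)
From mathcomp Require Import all_boot.
Set Implicit Arguments. Unset Strict Implicit. Unset Printing Implicit Defensive.

Section Defs.

(* A graph on a finite vertex type V is a symmetric boolean relation e; e x x
   means a loop at x. *)
Definition graph_connected (V : finType) (e : rel V) : Prop :=
  forall x y : V, connect e x y.

Definition mono_nbhd (V : finType) (e : rel V) : Prop :=
  forall a b : V, a != b -> #|[set w | e a w && e b w]| <= 1.

Definition oedge_inv (T : Type) (x : T * T) : T * T := (x.2, x.1).

Fixpoint is_walk (T : eqType) (e : rel T) (x : T) (W : seq (T * T)) (y : T)
  : bool :=
  match W with
  | [::] => x == y
  | p :: W' => [&& p.1 == x, e p.1 p.2 & is_walk e p.2 W' y]
  end.

Fixpoint reduced (T : eqType) (W : seq (T * T)) : bool :=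
  match W with
  | [::] => true
  | p :: W' =>
      match W' with
      | [::] => true
      | p' :: _ => (p' != oedge_inv p) && reduced W'
      end
  end.

Fixpoint reduce (T : eqType) (W : seq (T * T)) : seq (T * T) :=
  match W with
  | [::] => [::]
  | p :: W' =>
      match reduce W' with
      | p' :: W'' => if p' == oedge_inv p then W'' else p :: p' :: W''
      | [::] => [:: p]
      end
  end.

Definition rev_walk (T : Type) (W : seq (T * T)) : seq (T * T) :=
  rev (map (@oedge_inv T) W).

Definition wdot (T : eqType) (A B : seq (T * T)) : seq (T * T) :=
  reduce (A ++ B).

Definition map_walk (T U : Type) (f : T -> U) (W : seq (T * T)) : seq (U * U) :=
  map (fun p => (f p.1, f p.2)) W.

Definition in_pi (T : eqType) (e : rel T) (Q : seq (T * T)) : Prop :=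
  exists x y, is_walk e x Q y /\ reduced Q.

Definition is_Hcoloring (VG VH : finType) (eG : rel VG) (eH : rel VH)
  (s : VG -> VH) : Prop :=
  forall u v, eG u v -> eH (s u) (s v).

Fixpoint recol_seq_from (VG VH : finType) (eG : rel VG) (eH : rel VH)
  (s0 : VG -> VH) (rest : seq (VG -> VH)) : Prop :=
  match rest with
  | [::] => True
  | s1 :: r => is_Hcoloring eG eH s1 /\
               #|[set v | s0 v != s1 v]| = 1 /\
               recol_seq_from eG eH s1 r
  end.

Definition recol_seq (VG VH : finType) (eG : rel VG) (eH : rel VH)
  (s0 : VG -> VH) (rest : seq (VG -> VH)) : Prop :=
  is_Hcoloring eG eH s0 /\ recol_seq_from eG eH s0 rest.

(* one-step vertex walk: if v changes from a to b, S(v) = (a,h)(h,b) where h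
   is the (unique) common neighbour of a and b in H *)
Definition step_walk (VG VH : finType) (eH : rel VH)
  (s0 s1 : VG -> VH) (v : VG) : seq (VH * VH) :=
  let a := s0 v in let b := s1 v in
  if a == b then [::] else
  match [pick h | eH a h && eH b h] with
  | Some h => [:: (a, h); (h, b)]
  | None => [::]
  end.

Fixpoint vertex_walk (VG VH : finType) (eH : rel VH)
  (s0 : VG -> VH) (rest : seq (VG -> VH)) (v : VG) : seq (VH * VH) :=
  match rest with
  | [::] => [::]
  | s1 :: r => step_walk eH s0 s1 v ++ vertex_walk eH s1 r v
  end.

Definition realizable (VG VH : finType) (eG : rel VG) (eH : rel VH)
  (alpha beta : VG -> VH) (q : VG) (Q : seq (VH * VH)) : Prop :=
  exists rest : seq (VG -> VH),
    [/\ recol_seq eG eH alpha rest,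
        last alpha rest = beta &
        reduce (vertex_walk eH alpha rest q) = Q].

Definition topologically_valid (VG VH : finType) (eG : rel VG) (eH : rel VH)
  (alpha beta : VG -> VH) (q : VG) (Q : seq (VH * VH)) : Prop :=
  is_walk eH (alpha q) Q (beta q) /\ reduced Q /\
  forall C : seq (VG * VG), is_walk eG q C q ->
    reduce (map_walk beta C) =
      wdot (wdot (rev_walk Q) (reduce (map_walk alpha C))) Q.

End Defs.

(* Main.v *)
Require Import Defs.
From mathcomp Require Import all_boot.
Set Implicit Arguments. Unset Strict Implicit.

Section Alg.
Variable T : eqType.
Local Notation E := (T * T)%type.
Local Notation inv := (@oedge_inv T).
Implicit Types (p : E) (W A B X Y R : seq E).

Definition cr (p : E) (W : seq E) : seq E :=
  match W with p' :: W'' => if p' == inv p then W'' else p :: W | [::] => [:: p] end.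
Definition act (A W : seq E) := foldr cr W A.

Lemma invK (p : E) : inv (inv p) = p. Proof. by case: p. Qed.

Lemma reduce_cons p W : reduce (p :: W) = cr p (reduce W).
Proof. by rewrite /=; case: (reduce W). Qed.

Lemma reduce_act X : reduce X = act X [::].
Proof. by elim: X => //= p X IH; rewrite -IH; case: (reduce X). Qed.

Lemma act_cat X Y W : act (X ++ Y) W = act X (act Y W).
Proof. exact: foldr_cat. Qed.

Lemma reduced_tail0 (p : E) W : reduced (p :: W) -> reduced W.
Proof. by case: W => //= p' W /andP[]. Qed.

Lemma reduced_cons p W : reduced W -> reduced (cr p W).
Proof.
case: W => //= p' W Hr. case: ifP => Hp; first by apply: (reduced_tail0 Hr).
by rewrite /= Hp Hr.
Qed.

Lemma reduced_tail (p : E) W : reduced (p :: W) -> reduced W.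
Proof. by case: W => //= p' W /andP[]. Qed.

Lemma cr_reduced p W : reduced (p :: W) -> cr p W = p :: W.
Proof. by case: W => //= p' W /andP[/negbTE ->]. Qed.

Lemma act_reduced X W : reduced W -> reduced (act X W).
Proof. by elim: X => //= p X IH /IH; apply: reduced_cons. Qed.

Lemma reduce_reduced X : reduced (reduce X).
Proof. by rewrite reduce_act; apply: act_reduced. Qed.

Lemma crK p W : reduced W -> cr p (cr (inv p) W) = W.
Proof.
case: W => [|p' W] Hr; first by rewrite /cr eqxx.
rewrite {2}/cr invK; case: eqP => [Ep | Hne].
  by subst; rewrite cr_reduced.
by rewrite /cr eqxx.
Qed.

Lemma crK' p W : reduced W -> cr (inv p) (cr p W) = W.
Proof. by move=> Hr; rewrite -{2}(invK p) crK. Qed.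

Lemma cr_act p R W : reduced R -> reduced W -> cr p (act R W) = act (cr p R) W.
Proof.
case: R => [|p' R] // HR HW. rewrite {2}/cr; case: eqP => [Ep | //].
subst; rewrite /= crK //; exact: act_reduced.
Qed.

Lemma act_reduce A W : reduced W -> act (reduce A) W = act A W.
Proof.
move=> HW; elim: A => //= p A IH.
change (act (reduce (p :: A)) W = cr p (act A W)).
rewrite reduce_cons -IH cr_act //; exact: reduce_reduced.
Qed.

Lemma rev_walk_cons p A : rev_walk (p :: A) = rev_walk A ++ [:: inv p].
Proof. by rewrite /rev_walk /= rev_cons cats1. Qed.

Lemma act_revK A W : reduced W -> act (rev_walk A) (act A W) = W.
Proof.
elim: A W => //= p A IH W HW.
rewrite rev_walk_cons act_cat /= crK' ?IH //.
by apply: act_reduced.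
Qed.

Lemma act_Krev A W : reduced W -> act A (act (rev_walk A) W) = W.
Proof.
elim: A W => //= p A IH W HW.
rewrite rev_walk_cons act_cat /= IH ?crK //.
by apply: reduced_cons.
Qed.

Lemma act_rev_reduce A W : reduced W -> act (rev_walk (reduce A)) W = act (rev_walk A) W.
Proof.
move=> HW.
have HR := reduce_reduced A.
rewrite -{1}(act_revK A (act_reduced (rev_walk (reduce A)) HW)).
rewrite -(act_reduce A (act_reduced _ HW)) act_Krev //.
Qed.

Lemma reduce_catl A B : reduce (reduce A ++ B) = reduce (A ++ B).
Proof. by rewrite [LHS]reduce_act [RHS]reduce_act !act_cat act_reduce // act_reduced. Qed.
Lemma reduce_catr A B : reduce (A ++ reduce B) = reduce (A ++ B).
Proof. by rewrite [LHS]reduce_act [RHS]reduce_act !act_cat act_reduce. Qed.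
Lemma reduce_catrev A B : reduce (rev_walk (reduce A) ++ B) = reduce (rev_walk A ++ B).
Proof. by rewrite [LHS]reduce_act [RHS]reduce_act !act_cat act_rev_reduce // act_reduced. Qed.

Lemma reduce_cong X A A' Y : reduce A = reduce A' ->
  reduce (X ++ A ++ Y) = reduce (X ++ A' ++ Y).
Proof.
move=> H; rewrite !reduce_act !act_cat.
have HY : reduced (act Y [::]) by apply: act_reduced.
by rewrite -(act_reduce A HY) -(act_reduce A' HY) H.
Qed.

Lemma reduce_cancel X A Y : reduce (X ++ A ++ rev_walk A ++ Y) = reduce (X ++ Y).
Proof. by rewrite !reduce_act !act_cat act_Krev // act_reduced. Qed.

Lemma reduce_rev_self A : reduce (rev_walk A ++ A) = [::].
Proof. by rewrite reduce_act act_cat act_revK. Qed.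

Lemma walk_cat (e : rel T) x A y B z : is_walk e x A y -> is_walk e y B z -> is_walk e x (A ++ B) z.
Proof.
elim: A x => [|p A IH] x /=; first by move/eqP->.
by case/and3P=> -> -> /IH H /H ->.
Qed.

Lemma walk_cr (e : rel T) p W y : e p.1 p.2 -> is_walk e p.2 W y -> is_walk e p.1 (cr p W) y.
Proof.
case: W => [|p' W] /= He; first by move=> ->; rewrite eqxx He.
case: ifP => [/eqP -> | _] /=; last by move=> Hw; rewrite eqxx He.
by case/and3P.
Qed.

Lemma walk_reduce (e : rel T) x W y : is_walk e x W y -> is_walk e x (reduce W) y.
Proof.
elim: W x => [|p W IH] x //.
rewrite reduce_cons /=.
case/and3P=> /eqP <- He /IH Hw; exact: walk_cr.
Qed.
End Alg.
Lemma reduce_idem (T : eqType) (A : seq (T * T)) : reduce (reduce A) = reduce A.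
Proof. by have := reduce_catl A [::]; rewrite !cats0. Qed.
Lemma rev_walk_cat (T : Type) (A B : seq (T * T)) : rev_walk (A ++ B) = rev_walk B ++ rev_walk A.
Proof. by rewrite /rev_walk map_cat rev_cat. Qed.

Section G.
Variables (VG VH : finType) (eG : rel VG) (eH : rel VH).
Hypotheses (eG_sym : symmetric eG) (eG_irr : irreflexive eG) (eH_mnp : mono_nbhd eH).
Variables (s0 s1 : VG -> VH).
Hypotheses (c0 : is_Hcoloring eG eH s0) (c1 : is_Hcoloring eG eH s1).
Hypothesis P : forall u v, s0 u != s1 u -> s0 v != s1 v -> u = v.
Local Notation T := (step_walk eH s0 s1).

Lemma step_nb v u : s0 v != s1 v -> eG v u ->
  T v = [:: (s0 v, s0 u); (s0 u, s1 v)] /\ s1 u = s0 u.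
Proof.
move=> Hv Hvu.
have Hu : s1 u = s0 u.
  apply/eqP; rewrite eq_sym; apply/negPn/negP => Hu.
  by move: Hvu; rewrite (P Hu Hv) eG_irr.
split=> //; rewrite /step_walk (negbTE Hv).
have Hin : s0 u \in [set w | eH (s0 v) w && eH (s1 v) w].
  by rewrite inE c0 // -Hu c1.
case: pickP => [h /andP[Ha Hb] | Hn]; last by move: (Hn (s0 u)); rewrite inE in Hin; rewrite Hin.
have Hh : h \in [set w | eH (s0 v) w && eH (s1 v) w] by rewrite inE Ha Hb.
by move/card_le1_eqP: (eH_mnp Hv) => /(_ h (s0 u) Hh Hin) ->.
Qed.

Lemma step_nil v : s0 v == s1 v -> T v = [::].
Proof. by rewrite /step_walk => ->. Qed.

Lemma edge_step x z : eG x z ->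
  reduce (map_walk s1 [:: (x, z)]) =
  reduce (rev_walk (T x) ++ map_walk s0 [:: (x, z)] ++ T z).
Proof.
move=> Hxz.
case Ex: (s0 x == s1 x); case Ez: (s0 z == s1 z).
- by rewrite !step_nil //= (eqP Ex) (eqP Ez).
- have Hzx : eG z x by rewrite eG_sym.
  have [Hz Hx] := step_nb (negbT Ez) Hzx.
  rewrite (step_nil Ex) Hz.
  change (reduce [:: (s1 x, s1 z)] = reduce [:: (s0 x, s0 z); (s0 z, s0 x); (s0 x, s1 z)]).
  rewrite Hx; exact: esym (reduce_cancel [::] [:: (s0 x, s0 z)] [:: (s0 x, s1 z)]).
- have [Hx Hz] := step_nb (negbT Ex) Hxz.
  rewrite (step_nil Ez) Hx.
  change (reduce [:: (s1 x, s1 z)] = reduce [:: (s1 x, s0 z); (s0 z, s0 x); (s0 x, s0 z)]).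
  rewrite Hz; exact: esym (reduce_cancel [:: (s1 x, s0 z)] [:: (s0 z, s0 x)] [::]).
- by move: Hxz; rewrite (P (negbT Ex) (negbT Ez)) eG_irr.
Qed.

Lemma walk_step x C y : is_walk eG x C y ->
  reduce (map_walk s1 C) = reduce (rev_walk (T x) ++ map_walk s0 C ++ T y).
Proof.
elim: C x => [|[a z] C IH] x Hw.
  have Exy : x = y by apply/eqP.
  by subst; rewrite /map_walk /= reduce_rev_self.
move: Hw => /and3P[/eqP Hp He Hw]; simpl in Hp, He; subst a.
change (map_walk s1 ((x,z)::C)) with (map_walk s1 [:: (x,z)] ++ map_walk s1 C).
change (map_walk s0 ((x,z)::C)) with (map_walk s0 [:: (x,z)] ++ map_walk s0 C).
have HE := edge_step He.
move: HE; set A1 := map_walk s1 [:: (x,z)]; set A0 := map_walk s0 [:: (x,z)].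
clearbody A1 A0 => HE.
rewrite -reduce_catr (IH z Hw) reduce_catr.
rewrite -(reduce_catl A1) HE reduce_catl.
have := reduce_cancel (rev_walk (T x) ++ A0) (T z) (map_walk s0 C ++ T y).
by rewrite -!catA => ->.
Qed.
End G.

Lemma main_ind (VG VH : finType) (eG : rel VG) (eH : rel VH)
  (eG_sym : symmetric eG) (eG_irr : irreflexive eG) (eH_mnp : mono_nbhd eH)
  (hnb : forall v, exists u, eG v u) (q : VG) :
  forall rest s0, is_Hcoloring eG eH s0 -> recol_seq_from eG eH s0 rest ->
  is_walk eH (s0 q) (vertex_walk eH s0 rest q) (last s0 rest q) /\
  forall C, is_walk eG q C q ->
    reduce (map_walk (last s0 rest) C) =
    reduce (rev_walk (vertex_walk eH s0 rest q) ++ map_walk s0 C ++ vertex_walk eH s0 rest q).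
Proof.
elim=> [|s1 r IH] s0 c0 /=.
  by move=> _; split=> // C _; rewrite /rev_walk /= cats0.
case=> c1 [Hcard Hr].
have P : forall u v, s0 u != s1 u -> s0 v != s1 v -> u = v.
  move/eqP/cards1P: Hcard => [w Hw] u v Hu Hv.
  have : u \in [set v | s0 v != s1 v] by rewrite inE.
  have : v \in [set v | s0 v != s1 v] by rewrite inE.
  by rewrite Hw !inE => /eqP -> /eqP ->.
have [IHw IHc] := IH s1 c1 Hr.
split.
  apply: walk_cat IHw.
  case E: (s0 q == s1 q); first by rewrite step_nil //= E.
  have [u Hu] := hnb q.
  have [-> Hs] := step_nb eG_irr eH_mnp c0 c1 P (negbT E) Hu.
  have Huq : eG u q by rewrite eG_sym.
  by rewrite /= !eqxx c0 //= -{1}Hs c1.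
move=> C HC.
rewrite IHc // -[_ ++ map_walk s1 C ++ _]cat0s (reduce_cong _ _ (walk_step eG_sym eG_irr eH_mnp c0 c1 P HC)).
by rewrite rev_walk_cat -!catA.
Qed.


Theorem mainTheorem3 (VG VH : finType) (eG : rel VG) (eH : rel VH)
  (eG_sym : symmetric eG) (eG_irr : irreflexive eG)
  (eG_conn : graph_connected eG) (eG_edge : exists u v, eG u v)
  (eH_sym : symmetric eH)
  (eH_conn : graph_connected eH) (eH_edge : exists a b, eH a b)
  (eH_mnp : mono_nbhd eH)
  (alpha beta : VG -> VH)
  (alpha_col : is_Hcoloring eG eH alpha) (beta_col : is_Hcoloring eG eH beta)
  (q : VG) (Q : seq (VH * VH)) :
  in_pi eH Q ->
  realizable eG eH alpha beta q Q ->
  topologically_valid eG eH alpha beta q Q.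
Proof.
move=> _ [rest [[ca Hr] Hlast HQ]].
have hnb : forall v, exists u, eG v u.
  move=> v; have [u0 [v0 H0]] := eG_edge.
  have /connectP [p Hp Hl] := eG_conn v u0.
  case: p Hp Hl => [|u p] /=; first by move=> _ <-; exists v0.
  by case/andP=> H _ _; exists u.
have [Hw Hc] := main_ind eG_sym eG_irr eH_mnp hnb q ca Hr.
rewrite Hlast in Hw Hc; rewrite /topologically_valid -HQ.
split; first exact: walk_reduce.
split; first exact: reduce_reduced.
move=> C HC; rewrite Hc // /wdot reduce_catl -catA reduce_catrev.
rewrite -[rev_walk _ ++ _]cat0s (reduce_cong _ _ (reduce_idem (map_walk alpha C))).
by rewrite cat0s [in RHS]catA reduce_catr catA.
Qed.
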